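(* Fix $s,b\ge1$, let $\{a_i\}$ be the $(s,b)$-Generacci sequence, and let $p_{n,k}$ be the number of $m\in[a_{(n-1)b+1},a_{nb+1})$ whose legal decomposition has exactly $k$ summands (with $a_i=0$ for $i\le 0$). Let $g_n(y)=\sum_{k\ge0}p_{n,k}y^k$, the coefficient of $x^n$ in $\sum_{n,k}p_{n,k}x^ny^k$. Then for $y>0$ and all sufficiently large $n$, \[g_n(y)=\sum_{i=1}^{s+1}q_i(y)\alpha_i^n(y),\] where $\alpha_i(y)=1/\lambda_i(y)$ with $\lambda_1(y),\dots,\lambda_{s+1}(y)$ the distinct roots of $1-x-byx^{s+1}$, and the $q_i(y)$ are algebraic functions of $y$ depending on these roots.
   Context: Fix integers $s,b\ge1$. For an increasing sequence of positive integers $\{a_i\}_{i\ge1}$ define bins $\mathcal{B}_n=\{a_{b(n-1)+1},\dots,a_{bn}\}$ for $n\ge1$, $\mathcal{B}_j=\emptyset$ for $j\le 0$. A decomposition $m=a_{\ell_1}+\dots+a_{\ell_k}$ with $a_{\ell_1}>\dots>a_{\ell_k}$ is an $(s,b)$-Generacci legal decomposition if $\{a_{\ell_i},a_{\ell_{i+1}}\}\not\subset\mathcal{B}_{j-s}\cup\dots\cup\mathcal{B}_j$ for all $i,j$. The $(s,b)$-Generacci sequence is the increasing sequence in which each $a_i$ is the smallest positive integer with no legal decomposition using $a_1,\dots,a_{i-1}$; every nonnegative integer has a unique legal decomposition. *)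

(* Defs.v *)
From HB Require Import structures.
From mathcomp Require Import all_boot all_order all_algebra.
From mathcomp Require Import boolp reals.
From mathcomp Require Import complex.
Set Implicit Arguments. Unset Strict Implicit. Unset Printing Implicit Defensive.
Import Order.TTheory GRing.Theory Num.Theory.

(** Index of the bin containing position [i >= 1] (bins of size [b]):
    B_n = {a_{b(n-1)+1}, ..., a_{bn}}, so position i lies in bin ceil(i/b). *)
Definition bin_of (b i : nat) : nat := (i + b - 1) %/ b.

(** Position [i] lies in B_{j-s} ∪ ... ∪ B_j (bins with non-positive index are
    empty; since [bin_of b i >= 1] for [i >= 1], the truncated [j - s] in nat
    gives exactly this). *)
Definition in_window (s b j i : nat) : bool := (j - s <= bin_of b i <= j)%N.

(** [ls] is the list of indices [l_1, ..., l_k] of an (s,b)-Generacci legal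
    decomposition of [m] with respect to the sequence [a] (indexed from 1):
    all indices positive, a_{l_1} > ... > a_{l_k}, no two consecutive summands
    in a common window of s+1 consecutive bins, and m = sum of the a_{l_i}. *)
Definition legal_decomp (s b : nat) (a : nat -> nat) (ls : seq nat) (m : nat)
  : Prop :=
  [/\ all (fun l => 0 < l)%N ls,
      sorted (fun x y => a y < a x)%N ls,
      (forall i j, (i.+1 < size ls)%N ->
          ~~ (in_window s b j (nth 0 ls i) && in_window s b j (nth 0 ls i.+1)))
    & m = \sum_(l <- ls) a l]%N.

(** [a] is the (s,b)-Generacci sequence (terms a_1, a_2, ...; the value a 0
    is irrelevant): increasing, and each a_i is the smallest positive integer
    having no legal decomposition using a_1, ..., a_{i-1}. *)
Definition is_generacci (s b : nat) (a : nat -> nat) : Prop :=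
  (forall i, 0 < i -> a i < a i.+1)%N /\
  forall i, (0 < i)%N ->
    [/\ (0 < a i)%N,
        ~ (exists ls, all (fun l => l < i)%N ls /\ legal_decomp s b a ls (a i))
      & forall m, (0 < m < a i)%N ->
          exists ls, all (fun l => l < i)%N ls /\ legal_decomp s b a ls m].

(** Endpoints of the range [a_{(n-1)b+1}, a_{nb+1}), with a_i = 0 for i <= 0. *)
Definition lo_end (b : nat) (a : nat -> nat) (n : nat) : nat :=
  if n is n'.+1 then a (n' * b).+1 else 0.
Definition hi_end (b : nat) (a : nat -> nat) (n : nat) : nat := a (n * b).+1.

Definition p_nk (s b : nat) (a : nat -> nat) (n k : nat) : nat :=
  (\sum_(lo_end b a n <= m < hi_end b a n)
     `[< exists ls, legal_decomp s b a ls m /\ size ls = k >])%N.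

(** g_n(y) = sum_{k >= 0} p_{n,k} y^k.  Only k < a_{nb+1} can contribute
    (a legal decomposition of m has at most m summands), so the sum is
    truncated there. *)
Definition g_n (R : pzSemiRingType) (s b : nat) (a : nat -> nat) (n : nat) (y : R) : R :=
  (\sum_(0 <= k < hi_end b a n) (p_nk s b a n k)%:R * y ^+ k)%R.

Definition charpoly (R : rcfType) (s b : nat) (y : R) : {poly complex R} :=
  (1 - 'X - ((b%:R * y)%:C)%C%:P * 'X^(s.+1))%R.

(* Main.v *)
Require Import Defs.
From HB Require Import structures.
From mathcomp Require Import all_boot all_order all_algebra.
From mathcomp Require Import boolp reals complex.
From mathcomp Require Import zify ring.
Import Order.TTheory GRing.Theory Num.Theory.

Module CombM.
Set Implicit Arguments. Unset Strict Implicit. Unset Printing Implicit Defensive.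

Section Comb.
Variables (s b : nat) (a : nat -> nat).
Hypotheses (Hs : (0 < s)%N) (Hb : (0 < b)%N) (Hgen : is_generacci s b a).

Definition bn i := bin_of b i.
Definition lrel (x y : nat) := (bn y + s < bn x)%N.
Definition legal (L : seq nat) := all (fun l => 0 < l)%N L && sorted lrel L.
Definition sa (L : seq nat) := (\sum_(l <- L) a l)%N.

Lemma a_inc i : (0 < i)%N -> (a i < a i.+1)%N.
Proof. by case: Hgen => H _; apply: H. Qed.

Lemma a_mono i j : (0 < i)%N -> (i < j)%N -> (a i < a j)%N.
Proof.
move=> i0; elim: j => // j IH; rewrite ltnS leq_eqVlt => /orP [/eqP <-|lt].
  exact: a_inc.
by apply: ltn_trans (IH lt) (a_inc _); apply: leq_trans lt.
Qed.

Lemma a_le i j : (0 < i)%N -> (i <= j)%N -> (a i <= a j)%N.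
Proof. by move=> i0; rewrite leq_eqVlt => /orP [/eqP ->//|/(a_mono i0)/ltnW]. Qed.

Lemma a1 : a 1 = 1%N.
Proof.
case: Hgen => _ /(_ 1%N isT) [p0 _ H].
apply/eqP; rewrite eqn_leq p0 andbT leqNgt; apply/negP => lt.
have [ls [Hall [Hpos _ _ Hm]]] := H 1%N lt.
move: Hm; suff -> : ls = [::] by rewrite big_nil.
case: ls Hall Hpos => // l ls /= /andP [l1 _] /andP [l0 _]; lia.
Qed.

Lemma bn_le x y : (x <= y)%N -> (bn x <= bn y)%N.
Proof. by move=> le; apply: leq_div2r; rewrite leq_sub2r // leq_add2r. Qed.

Lemma lrel_lt x y : lrel x y -> (y < x)%N.
Proof.
rewrite /lrel => H; rewrite ltnNge; apply/negP => /bn_le; lia.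
Qed.

Lemma lrel_trans : transitive lrel.
Proof. move=> y x z; rewrite /lrel; lia. Qed.

Lemma legal_decompE L m : legal_decomp s b a L m <-> legal L /\ m = sa L.
Proof.
rewrite /legal_decomp /legal /sa; split.
  case=> Hp /(sortedP 0%N) Hs' Hw ->; split=> //; rewrite Hp /=.
  apply/(sortedP 0%N) => i lt.
  have px : (0 < nth 0 L i)%N by apply: (all_nthP 0%N Hp); lia.
  have py : (0 < nth 0 L i.+1)%N by apply: (all_nthP 0%N Hp).
  have ha := Hs' i lt.
  have yx : (nth 0 L i.+1 < nth 0 L i)%N.
    rewrite ltnNge; apply/negP => /(a_le px); lia.
  have := bn_le (ltnW yx); have := Hw i (bn (nth 0 L i)) lt.
  rewrite /in_window /lrel /bn; lia.
case=> /andP [Hp /(sortedP 0%N) Hs'] ->; split=> //.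
  apply/(sortedP 0%N) => i lt.
  have py : (0 < nth 0 L i.+1)%N by apply: (all_nthP 0%N Hp).
  exact: a_mono py (lrel_lt (Hs' i lt)).
move=> i j lt; have := Hs' i lt; rewrite /in_window /lrel /bn; lia.
Qed.

Definition kk i := ((bn i - s.+1) * b)%N.
Definition inS i m := exists L, [/\ legal L, all (fun l => l <= i)%N L & sa L = m].
Definition Pinv i :=
  (forall m, (m < a i.+1)%N <-> inS i m) /\
  (forall L1 L2, legal L1 -> legal L2 -> all (fun l => l <= i)%N L1 ->
     all (fun l => l <= i)%N L2 -> sa L1 = sa L2 -> L1 = L2).

Lemma lrel_kk i l : (0 < l)%N -> lrel i l = (l <= kk i)%N.
Proof.
move=> l0; rewrite /lrel /kk /bn /bin_of.
set J := ((i + b - 1) %/ b - s.+1)%N.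
have E : ((l + b - 1) %/ b < J.+1)%N = (l + b - 1 < J.+1 * b)%N by rewrite ltn_divLR.
rewrite mulSn in E.
apply/idP/idP => H.
  have : ((l + b - 1) %/ b < J.+1)%N by rewrite /J; lia.
  rewrite E; lia.
have : ((l + b - 1) %/ b < J.+1)%N by rewrite E; lia.
rewrite /J; lia.
Qed.

Lemma kk_lt i : (0 < i)%N -> (kk i < i)%N.
Proof.
move=> i0; rewrite /kk /bn /bin_of.
have := leq_trunc_div (i + b - 1) b.
set q := ((i + b - 1) %/ b)%N => H.
have : ((q - s.+1) * b <= q.-1 * b)%N by apply: leq_mul => //; lia.
have q1 : (1 <= q)%N by rewrite /q leq_divRL //; lia.
have : (q.-1 * b + b = q * b)%N by rewrite addnC -mulSn prednK.
lia.
Qed.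

Lemma legal_cons x L : legal (x :: L) = [&& (0 < x)%N, legal L & all (lrel x) L].
Proof.
rewrite /legal /= path_sortedE; last exact: lrel_trans.
by rewrite andbA andbA; case: (0 < x)%N; case: (all _ L); case: (all (lrel x) L); case: (sorted _ L).
Qed.

Lemma legal_pos L : legal L -> all (fun l => 0 < l)%N L.
Proof. by case/andP. Qed.

Lemma cases_legal i L : (0 < i)%N -> legal L -> all (fun l => l <= i)%N L ->
  all (fun l => l <= i.-1)%N L \/
  exists L', [/\ L = i :: L', legal L' & all (fun l => l <= kk i)%N L'].
Proof.
move=> i0; case: L => [|x L]; first by left.
rewrite legal_cons => /and3P [x0 HL Hr] /= /andP [xi Hall].
case: (ltngtP x i) => [xlt| |xe]; last 2 first.
- lia.
- right; exists L; split=> //; first by rewrite xe.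
  apply/allP => l lL; have l0 : (0 < l)%N by move/allP: (legal_pos HL); apply.
  by rewrite -lrel_kk // -xe; move/allP: Hr; apply.
left; rewrite /= (_ : (x <= i.-1)%N); last by lia.
apply/allP => l lL; have := lrel_lt (allP Hr l lL); lia.
Qed.

Lemma legal_build i L : (0 < i)%N -> legal L -> all (fun l => l <= kk i)%N L ->
  legal (i :: L).
Proof.
move=> i0 HL Hk; rewrite legal_cons i0 HL /=.
apply/allP => l lL; have l0 : (0 < l)%N by move/allP: (legal_pos HL); apply.
by rewrite lrel_kk //; move/allP: Hk; apply.
Qed.

Lemma all_le_mono i j L : (i <= j)%N -> all (fun l => l <= i)%N L -> all (fun l => l <= j)%N L.
Proof. by move=> ij /allP H; apply/allP => l /H; lia. Qed.

Lemma Pinv0 : Pinv 0.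
Proof.
have E : forall L, legal L -> all (fun l => l <= 0)%N L -> L = [::].
  move=> [|x L] //; rewrite legal_cons => /and3P [x0 _ _] /= /andP [xl _]; lia.
split.
  move=> m; rewrite a1; split.
    by rewrite ltnS leqn0 => /eqP ->; exists [::]; rewrite /sa big_nil.
  by case=> L [HL Hall <-]; rewrite (E _ HL Hall) /sa big_nil.
by move=> L1 L2 H1 H2 A1 A2 _; rewrite (E _ H1 A1) (E _ H2 A2).
Qed.

Lemma Sc i : (0 < i)%N -> Pinv i.-1 -> Pinv (kk i) ->
  forall m, inS i m <-> (m < a i + a (kk i).+1)%N.
Proof.
move=> i0 [C1 _] [C2 _] m; have ei : i.-1.+1 = i by lia.
split.
  case=> L [HL Hall <-]; case: (cases_legal i0 HL Hall).
    move=> Hall'; have : (sa L < a i)%N by rewrite -ei; apply/C1; exists L.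
    lia.
  case=> L' [-> HL' Hall']; rewrite /sa big_cons -/(sa L') ltn_add2l.
  by apply/C2; exists L'.
move=> lt; case: (ltnP m (a i)) => [lti|gei].
  have : inS i.-1 m by apply/C1; rewrite ei.
  case=> L [HL Hall <-]; exists L; split=> //; exact: all_le_mono (leq_pred _) Hall.
have : inS (kk i) (m - a i) by apply/C2; lia.
case=> L [HL Hall Hs']; exists (i :: L); split.
- exact: legal_build.
- rewrite /= leqnn /=; apply: all_le_mono Hall; exact: ltnW (kk_lt i0).
- rewrite /sa big_cons -/(sa L) Hs'; lia.
Qed.

Lemma inS_gen i m : inS i m <-> exists ls, all (fun l => l < i.+1)%N ls /\ legal_decomp s b a ls m.
Proof.
split.
  case=> L [HL Hall <-]; exists L; split; last by apply/legal_decompE.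
  by apply: sub_all Hall => l; rewrite ltnS.
case=> L [Hall /legal_decompE [HL ->]]; exists L; split=> //.
Qed.

Lemma a_rec_gen i : (0 < i)%N -> Pinv i.-1 -> Pinv (kk i) ->
  a i.+1 = (a i + a (kk i).+1)%N.
Proof.
move=> i0 P1 P2; have SC := Sc i0 P1 P2.
case: Hgen => _ /(_ i.+1 isT) [p0 Hno Hall].
have ai0 : (0 < a i)%N by case: Hgen => _ /(_ i i0) [].
apply/eqP; rewrite eqn_leq; apply/andP; split.
  rewrite leqNgt; apply/negP => lt.
  have : inS i (a i + a (kk i).+1) by apply/inS_gen; apply: Hall; lia.
  by move/SC; rewrite ltnn.
rewrite leqNgt; apply/negP => /SC /inS_gen; exact: Hno.
Qed.

Lemma Pinv_step i : (0 < i)%N -> Pinv i.-1 -> Pinv (kk i) -> Pinv i.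
Proof.
move=> i0 P1 P2; have ei : i.-1.+1 = i by lia.
have low : forall L, legal L -> all (fun l => l <= i.-1)%N L -> (sa L < a i)%N.
  by move=> L HL Hall; rewrite -ei; apply/P1.1; exists L.
split.
  by move=> m; rewrite (a_rec_gen i0 P1 P2) Sc.
move=> L1 L2 H1 H2 A1 A2 E.
case: (cases_legal i0 H1 A1) => [B1|[L1' [e1 H1' B1]]];
case: (cases_legal i0 H2 A2) => [B2|[L2' [e2 H2' B2]]].
- exact: P1.2.
- have := low _ H1 B1; rewrite E e2 /sa big_cons; lia.
- have := low _ H2 B2; rewrite -E e1 /sa big_cons; lia.
- rewrite e1 e2; congr (_ :: _); apply: P2.2 => //.
  by move: E; rewrite e1 e2 /sa !big_cons => /addnI.
Qed.

Lemma Pinv_all i : Pinv i.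
Proof.
elim/ltn_ind: i => i IH.
case: i IH => [|i] IH; first exact: Pinv0.
apply: Pinv_step => //; apply: IH => //; exact: kk_lt.
Qed.

Lemma a_rec i : (0 < i)%N -> a i.+1 = (a i + a (kk i).+1)%N.
Proof. by move=> i0; rewrite (a_rec_gen i0 (Pinv_all _) (Pinv_all _)). Qed.

Lemma a_ge i : (i <= a i)%N.
Proof.
elim: i => // i IH; case: i IH => [|i] IH; first by rewrite a1.
have := a_inc (ltn0Sn i); lia.
Qed.

Lemma sa_ge L : legal L -> all (fun l => l <= sa L)%N L.
Proof.
move=> HL; apply/allP => l lL.
apply: leq_trans (a_ge l) _; rewrite /sa (big_rem l lL) /=; exact: leq_addr.
Qed.

Lemma uniq_dec L1 L2 : legal L1 -> legal L2 -> sa L1 = sa L2 -> L1 = L2.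
Proof.
move=> H1 H2 E; have := sa_ge H2; rewrite -E => A2.
exact: ((Pinv_all (sa L1)).2 L1 L2 H1 H2 (sa_ge H1) A2 E).
Qed.

Lemma exists_dec m : exists L, legal L && (sa L == m).
Proof.
have : inS m m by apply/(Pinv_all m).1; apply: leq_trans (a_ge _); done.
by case=> L [HL _ <-]; exists L; rewrite HL eqxx.
Qed.

Definition dec m := xchoose (exists_dec m).
Definition ell m := size (dec m).

Lemma dec_legal m : legal (dec m).
Proof. by have /andP [] := xchooseP (exists_dec m). Qed.
Lemma dec_sum m : sa (dec m) = m.
Proof. by have /andP [_ /eqP] := xchooseP (exists_dec m). Qed.

Lemma dec_eq L : legal L -> dec (sa L) = L.
Proof. by move=> HL; apply: uniq_dec => //; [exact: dec_legal | rewrite dec_sum]. Qed.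

Lemma dec_bound i m : (m < a i.+1)%N -> all (fun l => l <= i)%N (dec m).
Proof.
move/(Pinv_all i).1 => [L [HL Hall <-]]; by rewrite dec_eq.
Qed.

Lemma ell_le m : (ell m <= m)%N.
Proof.
rewrite /ell -{2}(dec_sum m); have := legal_pos (dec_legal m).
elim: (dec m) => //= l L IH /andP [l0 Hp]; rewrite /sa big_cons -/(sa L).
have := IH Hp; have := a_ge l; lia.
Qed.

Lemma pk_char m k :
  `[< exists ls, legal_decomp s b a ls m /\ size ls = k >] = (k == ell m).
Proof.
apply/asboolP/eqP.
  case=> L [/legal_decompE [HL ->] <-]; by rewrite /ell dec_eq.
move=> ->; exists (dec m); split=> //; apply/legal_decompE; split; first exact: dec_legal.
by rewrite dec_sum.
Qed.

Lemma ell_shift i m : (0 < i)%N -> (m < a (kk i).+1)%N -> ell (m + a i) = (ell m).+1.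
Proof.
move=> i0 lt; have HL : legal (i :: dec m).
  apply: legal_build => //; [exact: dec_legal | exact: dec_bound].
have : sa (i :: dec m) = (m + a i)%N by rewrite /sa big_cons -/(sa _) dec_sum addnC.
by move=> <-; rewrite /ell dec_eq.
Qed.

Section Gen.
Variables (R0 : comPzRingType) (y : R0).
Local Open Scope ring_scope.

Definition Phi i := \sum_(0 <= m < a i.+1) y ^+ ell m.

Lemma sum_delta (hi l : nat) : (l < hi)%N ->
  \sum_(0 <= k < hi) (k == l)%:R * y ^+ k = y ^+ l.
Proof.
move=> lt; rewrite (bigD1_seq l) ?mem_iota ?iota_uniq //=; last by rewrite subn0.
have -> : (l == l) = true by apply/eqP.
rewrite mul1r big1 ?addr0 //.
by move=> k /negbTE ->; rewrite mul0r.
Qed.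

Lemma g_sum n : g_n s b a n y = \sum_(lo_end b a n <= m < hi_end b a n) y ^+ ell m.
Proof.
rewrite /g_n /p_nk.
under eq_bigr => k _ do rewrite natr_sum mulr_suml.
rewrite exchange_big_nat /=; apply: eq_big_nat => m /andP [_ mlt].
under eq_bigr => k _ do rewrite pk_char.
apply: sum_delta; apply: leq_ltn_trans (ell_le m) mlt.
Qed.

Lemma Phi_rec i : (0 < i)%N -> Phi i = Phi i.-1 + y * Phi (kk i).
Proof.
move=> i0; rewrite /Phi a_rec // (big_cat_nat (n:=a i)) //=; last exact: leq_addr.
have ei : i.-1.+1 = i by lia.
rewrite ei; congr (_ + _).
rewrite -{1}(add0n (a i)) big_addn addKn mulr_sumr; apply: eq_big_nat => m /andP [_ lt].
by rewrite ell_shift // exprS.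
Qed.

Lemma bn_bin n r : (0 < n)%N -> (0 < r <= b)%N -> bn (n.-1 * b + r) = n.
Proof.
move=> n0 rb; rewrite /bn /bin_of.
have E : (n.-1 * b + b = n * b)%N by rewrite addnC -mulSn prednK.
have -> : (n.-1 * b + r + b - 1 = n * b + r.-1)%N by lia.
rewrite divnMDl // divn_small ?addn0 //; lia.
Qed.

Lemma Phi_bin n r : (0 < n)%N -> (r <= b)%N ->
  Phi (n.-1 * b + r) = Phi (n.-1 * b) + (y * Phi ((n - s.+1) * b)) *+ r.
Proof.
move=> n0; elim: r => [|r IH] rb; first by rewrite addn0 mulr0n addr0.
rewrite addnS Phi_rec // -pred_Sn IH ?(ltnW rb) // mulrSr addrA; congr (_ + _ * Phi _).
by rewrite /kk -addnS bn_bin //; lia.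
Qed.

Lemma Phi_g n : (0 < n)%N -> Phi (n * b) = Phi (n.-1 * b) + g_n s b a n y.
Proof.
move=> n0; rewrite g_sum /Phi; case: n n0 => // n _ /=.
rewrite (big_cat_nat (n:=a (n * b).+1)) //.
apply: a_le => //; rewrite ltnS mulSn; exact: leq_addl.
Qed.

Lemma g_bin n : (0 < n)%N -> g_n s b a n y = (y * Phi ((n - s.+1) * b)) *+ b.
Proof.
move=> n0; apply: (@addrI _ (Phi (n.-1 * b))); rewrite -Phi_g // -Phi_bin //.
by rewrite addnC -mulSn prednK.
Qed.

Lemma g_rec n : (0 < n)%N ->
  g_n s b a (n + s.+1) y = g_n s b a (n + s) y + b%:R * y * g_n s b a n y.
Proof.
move=> n0; rewrite (g_bin (n := (n + s.+1)%N)) ?(g_bin (n := (n + s)%N)); try lia.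
have -> : (n + s.+1 - s.+1 = n)%N by lia.
have -> : (n + s - s.+1 = n.-1)%N by lia.
rewrite Phi_g // -mulr_natl -[in RHS]mulr_natl mulrDr mulrDr; congr (_ + _).
by rewrite mulrA.
Qed.

End Gen.
End Comb.

End CombM.
Import CombM.

Module LinM.
Set Implicit Arguments. Unset Strict Implicit. Unset Printing Implicit Defensive.
Local Open Scope ring_scope.

Section Lin.
Variables (F : fieldType) (d : nat) (al : 'I_d.+1 -> F).
Hypotheses (al_inj : injective al) (al_nz : forall i, al i != 0).

Definition Vm : 'M[F]_d.+1 := Vandermonde d.+1 (\row_i al i).

Lemma Vm_unit : Vm \in unitmx.
Proof.
rewrite unitmxE unitfE /Vm det_Vandermonde; apply/prodf_neq0 => i _.
apply/prodf_neq0 => j ij; rewrite !mxE subr_eq0; apply/eqP => /al_inj E.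
by move: ij; rewrite E ltnn.
Qed.

Lemma sum_ind (n m : nat) (f : nat -> F) :
  \sum_(j < n) (j == m :> nat)%:R * f j = if (m < n)%N then f m else 0.
Proof.
rewrite -(big_mkord xpredT (fun j => (j == m)%:R * f j)).
case: ltnP => lt.
  rewrite (bigD1_seq m) ?mem_iota ?iota_uniq //=; last by rewrite subn0.
  have -> : (m == m) = true by apply/eqP.
  by rewrite mul1r big1 ?addr0 // => k /negbTE ->; rewrite mul0r.
rewrite big1_seq // => k /andP [_]; rewrite mem_iota => /andP [_ kn].
have -> : (k == m) = false by apply/negbTE; rewrite neq_ltn; apply/orP; left; lia.
by rewrite mul0r.
Qed.

Lemma rec_solve (c : F) (h : nat -> F) :
  (forall i, al i ^+ d.+1 = al i ^+ d + c) ->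
  (forall n, (0 < n)%N -> h (n + d.+1)%N = h (n + d)%N + c * h n) ->
  exists q : 'I_d.+1 -> F, forall n, (0 < n)%N -> h n = \sum_i q i * al i ^+ n.
Proof.
move=> Hal Hh.
pose hc : 'cV[F]_d.+1 := \col_k h k.+1.
pose r := invmx Vm *m hc.
exists (fun i => r i 0 / al i).
have base : forall k : 'I_d.+1, h k.+1 = \sum_i r i 0 / al i * al i ^+ k.+1.
  move=> k; have := congr1 (fun M : 'cV_d.+1 => M k 0) (mulKVmx Vm_unit hc).
  rewrite !mxE => <-; apply: eq_bigr => i _.
  by rewrite !mxE exprS mulrA mulfVK // mulrC.
elim/ltn_ind => n IH n0.
case: (leqP n d.+1) => nle.
  have := base (Ordinal (n:=d.+1) (m:=n.-1) ltac:(lia)); rewrite /= prednK //.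
have -> : n = ((n - d.+1) + d.+1)%N by lia.
rewrite Hh; last by lia.
rewrite !IH; try lia.
rewrite mulr_sumr -big_split /=; apply: eq_bigr => i _.
rewrite mulrCA -mulrDr; congr (_ * _).
by rewrite !exprD Hal mulrDr [c * _]mulrC.
Qed.

Lemma trace_pow (Cm : 'M[F]_d.+1) :
  Vm^T *m Cm = diag_mx (\row_i al i) *m Vm^T ->
  forall n, \tr (Cm ^+ n) = \sum_i al i ^+ n.
Proof.
move=> HC.
have E : forall n, Vm^T *m Cm ^+ n = diag_mx (\row_i al i ^+ n) *m Vm^T.
  elim=> [|n IH].
    rewrite expr0 mulmx1; apply/matrixP => i k; rewrite mul_diag_mx !mxE expr0 mul1r.
    by [].
  rewrite exprSr -mulmxE mulmxA IH -mulmxA HC mulmxA mulmx_diag; congr (diag_mx _ *m _).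
  by apply/matrixP => i j; rewrite !mxE exprSr.
have U : Vm^T \in unitmx by rewrite unitmx_tr Vm_unit.
move=> n; rewrite -(mulKmx U (Cm ^+ n)) E mxtrace_mulC mulmxK // mxtrace_diag.
by apply: eq_bigr => i _; rewrite mxE.
Qed.

Lemma det_fact (q : 'I_d.+1 -> F) :
  \det (\matrix_(j < d.+1, k < d.+1)
     ((\sum_i q i * al i ^+ (1 + j + k))%:P - 'X * (\sum_i al i ^+ (1 + j + k))%:P))
  = (\det Vm ^+ 2)%:P * \prod_i ((al i)%:P * ((q i)%:P - 'X)).
Proof.
pose Vp := map_mx (@polyC F) Vm.
pose D : 'rV[{poly F}]_d.+1 := \row_i ((al i)%:P * ((q i)%:P - 'X)).
have -> : \matrix_(j < d.+1, k < d.+1)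
     ((\sum_i q i * al i ^+ (1 + j + k))%:P - 'X * (\sum_i al i ^+ (1 + j + k))%:P)
     = Vp *m diag_mx D *m Vp^T.
  apply/matrixP => j k; rewrite !mxE !rmorph_sum mulr_sumr -sumrB.
  apply: eq_bigr => i _; rewrite mul_mx_diag !mxE.
  rewrite !exprD expr1 !rmorphM /=.
  ring.
rewrite !det_mulmx det_tr det_diag /Vp det_map_mx.
rewrite [in RHS]expr2 polyCM -!mulrA; congr (_ * _); rewrite mulrC; congr (_ * _).
by apply: eq_bigr => i _; rewrite mxE.
Qed.

Lemma comp_ok (c : F) (Cm : 'M[F]_d.+1) :
  (forall i, al i ^+ d.+1 = al i ^+ d + c) ->
  (forall j k : 'I_d.+1, Cm j k = (j == k.+1 :> nat)%:R +
      (k == d :> nat)%:R * ((j == d :> nat)%:R + (j == 0 :> nat)%:R * c)) ->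
  Vm^T *m Cm = diag_mx (\row_i al i) *m Vm^T.
Proof.
move=> Hal HCm; apply/matrixP => i k; rewrite mul_diag_mx !mxE.
have E : forall j : 'I_d.+1, Vm^T i j * Cm j k =
   (j == k.+1 :> nat)%:R * al i ^+ j + (k == d :> nat)%:R *
     ((j == d :> nat)%:R * al i ^+ j + c * ((j == 0 :> nat)%:R * al i ^+ j)).
  by move=> j; rewrite HCm !mxE; ring.
rewrite (eq_bigr _ (fun j _ => E j)) big_split /= -mulr_sumr big_split /= -mulr_sumr.
rewrite !sum_ind /= expr0 mulr1.
case: (ltngtP k d) => kd.
- by rewrite ltnS kd mul0r addr0 exprS.
- by have := ltn_ord k; lia.
- rewrite kd ltnn mul1r add0r.
  by rewrite ltnSn -Hal exprS.
Qed.
End Lin.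

End LinM.
Import LinM.

Unset Implicit Arguments. Set Strict Implicit.
Local Open Scope ring_scope.

Lemma g_n_morph (R1 R2 : pzSemiRingType) (f : {rmorphism R1 -> R2}) s b a n x :
  f (g_n s b a n x) = g_n s b a n (f x).
Proof.
rewrite /g_n rmorph_sum; apply: eq_bigr => k _.
by rewrite rmorphM rmorph_nat rmorphXn.
Qed.

Lemma map_mxX (R1 R2 : pzRingType) (f : {rmorphism R1 -> R2}) d (A : 'M[R1]_d.+1) n :
  map_mx f (A ^+ n) = (map_mx f A) ^+ n.
Proof.
elim: n => [|n IH]; first by rewrite !expr0 map_mx1.
by rewrite !exprS -!mulmxE map_mxM IH.
Qed.

Lemma tr_map (R1 R2 : pzRingType) (f : {rmorphism R1 -> R2}) d (A : 'M[R1]_d) :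
  f (\tr A) = \tr (map_mx f A).
Proof. by rewrite /mxtrace rmorph_sum; apply: eq_bigr => i _; rewrite mxE. Qed.

Lemma al_props (R : realType) (s b : nat) (y : R) (x : complex R) :
  root (charpoly s b y) x ->
  x != 0 /\ (x^-1) ^+ s.+1 = (x^-1) ^+ s + b%:R * (y%:C)%C.
Proof.
rewrite /root /charpoly !hornerE => /eqP E.
have xnz : x != 0.
  by apply/eqP => x0; move: E; rewrite x0 expr0n /= mulr0 !subr0 => /eqP; rewrite oner_eq0.
split=> //.
have c : ((b%:R * y)%:C)%C = b%:R * (y%:C)%C :> complex R by rewrite rmorphM rmorph_nat.
rewrite c in E.
apply: (mulIf (expf_neq0 s.+1 xnz)).
rewrite -exprMn mulVf // expr1n mulrDl.
rewrite exprS [x * _]mulrC mulrA -exprMn mulVf // expr1n mul1r.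
transitivity (1 - (1 - x - b%:R * (y%:C)%C * x ^+ s.+1)); first by rewrite E subr0.
by rewrite -exprSr -addrA -opprD subKr.
Qed.
Arguments al_props {R s b y x}.

Theorem proposition2p16 (R : realType) (s b : nat) (a : nat -> nat) :
  (1 <= s)%N -> (1 <= b)%N -> is_generacci s b a ->
  exists P : {poly {poly complex R}}, P != 0 /\
  forall y : R, 0 < y ->
  forall lam : 'I_s.+1 -> complex R,
    injective lam ->
    (forall i, root (charpoly s b y) (lam i)) ->
    (forall z, root (charpoly s b y) z -> exists i, z = lam i) ->
  exists (q : 'I_s.+1 -> complex R) (N : nat),
    (forall i, (map_poly (fun c : {poly complex R} => c.[y%:C%C]) P).[q i] = 0) /\
    forall n, (N <= n)%N ->
      (g_n s b a n y)%:C%C = \sum_(i < s.+1) q i * ((lam i)^-1) ^+ n.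
Proof.
move=> Hs Hb Hgen.
pose Cm : 'M[{poly complex R}]_s.+1 := \matrix_(j, k) ((j == k.+1 :> nat)%:R +
   (k == s :> nat)%:R * ((j == s :> nat)%:R + (j == 0 :> nat)%:R * (b%:R * 'X))).
pose Mg : 'M[{poly {poly complex R}}]_s.+1 := \matrix_(j, k)
   ((g_n s b a (1 + j + k) ('X : {poly complex R}))%:P - 'X * (\tr (Cm ^+ (1 + j + k)))%:P).
pose P0 := \det Mg.
have KEY : forall (y : R) (lam : 'I_s.+1 -> complex R), injective lam ->
    (forall i, root (charpoly s b y) (lam i)) ->
    exists q : 'I_s.+1 -> complex R,
    [/\ forall n, (0 < n)%N ->
          (g_n s b a n y)%:C%C = \sum_(i < s.+1) q i * ((lam i)^-1) ^+ n,
        map_poly (fun c : {poly complex R} => c.[y%:C%C]) P0 =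
          (\det (Vm (fun i => (lam i)^-1)) ^+ 2)%:P *
            \prod_i (((lam i)^-1)%:P * ((q i)%:P - 'X)),
        forall i, (lam i)^-1 != 0 &
        \det (Vm (fun i => (lam i)^-1)) != 0].
  move=> y lam inj Hr.
  pose al i := (lam i)^-1.
  have al_nz : forall i, al i != 0 by move=> i; rewrite invr_eq0; case: (al_props (Hr i)).
  have al_inj : injective al by move=> i j /invr_inj /inj.
  pose y' : complex R := (y%:C)%C.
  pose c := b%:R * y'.
  have Hal : forall i, al i ^+ s.+1 = al i ^+ s + c by move=> i; case: (al_props (Hr i)).
  have [q Hq] := rec_solve (h := fun n => g_n s b a n y') al_inj al_nz Hal
    (fun n hn => g_rec Hs Hb Hgen y' hn).
  have gC : forall n, (g_n s b a n y)%:C%C = g_n s b a n y'.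
    by move=> n; rewrite /y' -(@g_n_morph _ _ (real_complex R)).
  exists q; split => //.
  - by move=> n n0; rewrite gC Hq.
  - rewrite -(det_fact al q).
    change (fun c0 : {poly complex R} => c0.[y']) with (horner_eval y').
    rewrite /P0 -(det_map_mx (map_poly (horner_eval y'))); congr (\det _); apply/matrixP => j k; rewrite !mxE.
    rewrite rmorphB rmorphM /= map_polyC map_polyX.
    have E1 : horner_eval y' (g_n s b a (1 + j + k) ('X : {poly complex R})) =
      \sum_i q i * al i ^+ (1 + j + k).
      by rewrite g_n_morph /= horner_evalE hornerX Hq.
    have E2 : horner_eval y' (\tr (Cm ^+ (1 + j + k))) = \sum_i al i ^+ (1 + j + k).
      rewrite tr_map map_mxX (trace_pow al_inj (comp_ok Hal _)) //.
      have hn : forall n : nat, (n%:R : {poly complex R}).[y'] = n%:R.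
        by move=> n; rewrite -polyC1 hornerMn hornerC.
      move=> j' k'; rewrite !mxE /= horner_evalE !hornerD !hornerM !hn.
      by rewrite !hornerD !hornerM !hn hornerX.
    rewrite map_polyC /=; rewrite !horner_evalE in E1 E2 *; by rewrite E1 E2.
  - rewrite -unitfE -unitmxE; exact: Vm_unit al_inj.
case: (pselect (exists (y : R) (lam : 'I_s.+1 -> complex R), injective lam /\
   (forall i, root (charpoly s b y) (lam i)))) => [[y0 [lam0 [inj0 Hr0]]]|Hno].
- exists P0; split.
    apply/eqP => P00; have [q [_ Hm Hnz Hdet]] := KEY y0 lam0 inj0 Hr0.
    move: Hm; rewrite P00 map_poly0 => /esym/eqP; rewrite mulf_eq0 polyC_eq0 expf_eq0.
    rewrite (negbTE Hdet) andbF /=; apply/negP; apply/prodf_neq0 => i _.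
    rewrite mulf_neq0 // ?polyC_eq0 // -opprB oppr_eq0 polyXsubC_eq0 //.
  move=> y _ lam inj Hr _; have [q [Hg Hm _ _]] := KEY y lam inj Hr.
  exists q, 1%N; split; last by move=> n n1; apply: Hg.
  move=> i; rewrite Hm hornerM hornerC horner_prod (bigD1 i) //= hornerM hornerC.
  by rewrite hornerD hornerN hornerC hornerX subrr !mulr0 mul0r mulr0.
- exists 1; split; first exact: oner_neq0.
  move=> y _ lam inj Hr _; exfalso; apply: Hno; exists y, lam; done.
Qed.
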